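(* Let $E$ be a finite set and let $S$ be a powerful multiset over $E$ with indicator function $f:2^E\to\mathbb{Z}_{\ge0}$ (with $f(\emptyset)\neq 0$). Then for every $X\subseteq E$, $f(\emptyset)$ divides $f(X)$.
   Context: A multiset over $E$ is a collection of subsets of $E$ with repetition; its indicator function $f$ assigns to each $X\subseteq E$ its multiplicity. Assuming $f(\emptyset)\neq 0$, its rank function is $r_S(X)=\log_2\Big(\sum_{Y\subseteq E} f(Y)\big/\sum_{Y\subseteq E\setminus X} f(Y)\Big)$, and $S$ is a powerful multiset if $r_S(X)$ is an integer for every $X\subseteq E$. *)

(* Defs.v *)
From mathcomp Require Import all_boot.
From Stdlib Require Import Reals.
Set Implicit Arguments. Unset Strict Implicit. Unset Printing Implicit Defensive.

Definition total_mass (E : finType) (f : {set E} -> nat) : nat :=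
  \sum_(Y : {set E}) f Y.

Definition avoid_mass (E : finType) (f : {set E} -> nat) (X : {set E}) : nat :=
  \sum_(Y : {set E} | Y \subset ~: X) f Y.

Definition log2 (x : R) : R := (ln x / ln 2)%R.

Definition rank_ms (E : finType) (f : {set E} -> nat) (X : {set E}) : R :=
  log2 (INR (total_mass f) / INR (avoid_mass f X))%R.

Definition is_integer (r : R) : Prop := exists z : Z, r = IZR z.

Definition powerful (E : finType) (f : {set E} -> nat) : Prop :=
  forall X : {set E}, is_integer (rank_ms f X).

(* Main.v *)
Require Import Defs.
From mathcomp Require Import all_boot.
From Stdlib Require Import Reals Lra Lia.
From mathcomp Require Import zify.

Lemma INR_expn2 n : INR (expn 2 n) = pow 2 n.
Proof. elim: n => [|n IH] //=; rewrite expnS mult_INR IH //. Qed.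

Lemma real_step (T A : nat) (z : Z) : (0 < A)%N -> (A <= T)%N ->
  log2 (INR T / INR A) = IZR z -> exists n, T = (A * expn 2 n)%N.
Proof.
move=> /ltP HA /leP HT; rewrite /log2 => Hz.
have A0 : (0 < INR A)%R by apply: lt_0_INR.
have AT : (INR A <= INR T)%R by apply: le_INR.
have l2 : (0 < ln 2)%R by rewrite -ln_1; apply: ln_increasing; lra.
set r := (INR T / INR A)%R in Hz.
have r1 : (1 <= r)%R.
  rewrite /r; apply (Rmult_le_reg_r (INR A)) => //.
  field_simplify; lra.
have lr : (0 <= ln r)%R.
  case: (Req_dec r 1) => [->|ne]; first by rewrite ln_1; lra.
  rewrite -ln_1; left; apply: ln_increasing; lra.
have Hz' : ln r = (IZR z * ln 2)%R by rewrite -Hz; field; lra.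
have z0 : (0 <= z)%Z.
  apply: le_IZR.
  apply (Rmult_le_reg_r (ln 2)) => //. lra.
exists (Z.to_nat z).
have e : r = (pow 2 (Z.to_nat z))%R.
  apply: ln_inv; [lra| apply: pow_lt; lra|].
  rewrite ln_pow; last lra.
  by rewrite INR_IZR_INZ Znat.Z2Nat.id.
apply: INR_eq; rewrite mult_INR INR_expn2.
rewrite /r in e.
rewrite -e; field; lra.
Qed.

Lemma sum_sub0 (E : finType) (f : {set E} -> nat) :
  (\sum_(Y : {set E} | Y \subset set0) f Y)%N = f set0.
Proof.
rewrite (eq_bigl (pred1 set0)); first by rewrite big_pred1_eq.
by move=> Y; rewrite /= subset0.
Qed.

Lemma avoid_pos (E : finType) (f : {set E} -> nat) X :
  (f set0 <= avoid_mass f X)%N.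
Proof.
rewrite /avoid_mass (bigD1 set0) ?sub0set //=; exact: leq_addr.
Qed.

Lemma avoid_le (E : finType) (f : {set E} -> nat) X :
  (avoid_mass f X <= total_mass f)%N.
Proof.
rewrite /avoid_mass /total_mass big_mkcond /=.
by apply: leq_sum => Y _; case: ifP.
Qed.

Theorem theorem5 (E : finType) (f : {set E} -> nat) :
  f set0 <> 0%N -> powerful f -> forall X : {set E}, (f set0 %| f X)%N.
Proof.
move=> f0 Hp.
have f0p : (0 < f set0)%N by rewrite lt0n; apply/eqP.
pose g X := avoid_mass f (~: X).
have gE X : g X = (\sum_(Y : {set E} | Y \subset X) f Y)%N.
  by rewrite /g /avoid_mass setCK.
have g0 : g set0 = f set0 by rewrite gE sum_sub0.
have pow X : exists n, total_mass f = (g X * expn 2 n)%N.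
  have [z Hz] := Hp (~: X); rewrite /rank_ms in Hz.
  have H := (real_step _ _ _ (leq_trans f0p (avoid_pos _ f (~: X))) (avoid_le _ f (~: X)) Hz). exact H.
have gd X : (f set0 %| g X)%N.
  have [a Ha] := pow X; have [b Hb] := pow set0.
  rewrite g0 in Hb.
  have gge : (f set0 <= g X)%N by rewrite /g avoid_pos.
  case: (leqP a b) => ab.
  - have e : (expn 2 b = expn 2 (b - a) * expn 2 a)%N by rewrite -expnD subnK.
    rewrite Hb e mulnA in Ha.
    have -> : g X = (f set0 * expn 2 (b - a))%N.
      by apply/eqP; rewrite -(eqn_pmul2r (expn_gt0 2 a)) Ha.
    exact: dvdn_mulr.
  - have e : (expn 2 a = expn 2 (a - b) * expn 2 b)%N by rewrite -expnD subnK // ltnW.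
    rewrite Ha e mulnA in Hb.
    have e2 : f set0 = (g X * expn 2 (a - b))%N.
      by apply/eqP; rewrite -(eqn_pmul2r (expn_gt0 2 b)) Hb.
    have : (2 <= expn 2 (a - b))%N.
      by rewrite -{1}(expn1 2) leq_exp2l // subn_gt0.
    move: gge; rewrite e2 => gge h2.
    have gp : (0 < g X)%N by apply: leq_trans gge; rewrite -e2.
    have : (g X * 2 <= g X * expn 2 (a - b))%N by rewrite leq_mul2l h2 orbT.
    lia.
suff H : forall n (X : {set E}), (#|X| <= n)%N -> (f set0 %| f X)%N by move=> X; exact: H _ X (leqnn _).
elim=> [|n IH] X HX.
  by move: HX; rewrite leqn0 cards_eq0 => /eqP ->.
have := gd X; rewrite gE (bigD1 X) //= dvdn_addl //.
apply: dvdn_sum => Y /andP [YX YnX]; apply: IH.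
have : (#|Y| < #|X|)%N by apply: proper_card; rewrite properEneq YnX YX.
lia.
Qed.
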